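(* In the setting below, for all $j\in\mathcal{S}$ the matrix $B_j=\gamma_jp_j\,M^{1/2}_{:,j}(M^{1/2}_{:,j})^\top$ satisfies $\|B_j\|_2\le1$.
   Context: Setting: $f:\mathbb{R}^p\to\mathbb{R}$ convex, differentiable with Lipschitz gradient; $g_j:\mathbb{R}\to\mathbb{R}\cup\{+\infty\}$ proper closed convex; $x^\star$ a minimizer of $f(x)+\sum_jg_j(x_j)$; $\mathcal{S}=\{j:\partial g_j(x^\star_j)\text{ is a singleton}\}$; $g_j$ is $\mathcal{C}^2$ near $x^\star_j$ for $j\in\mathcal{S}$, $f$ is $\mathcal{C}^2$ near $x^\star$, and $\nabla^2_{\mathcal{S},\mathcal{S}}f(x^\star)\succ0$. Step sizes $0<\gamma_j\le1/L_j$, $L_j$ the coordinatewise Lipschitz constant of $\nabla_jf$. For $j\in\mathcal{S}$, $z^\star_j=x^\star_j-\gamma_j\nabla_jf(x^\star)$, $p_j>0$ is the derivative of $\operatorname{prox}_{\gamma_jg_j}$ at $z^\star_j$, $u_j=\frac1{\gamma_jp_j}-\frac1{\gamma_j}$, $M=\nabla^2_{\mathcal{S},\mathcal{S}}f(x^\star)+\operatorname{diag}(u)$ (symmetric positive definite), $M^{1/2}$ its symmetric square root and $M^{1/2}_{:,j}$ its column indexed by $j$. $\|\cdot\|_2$ is the spectral norm. *)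

(* Defs.v *)
From HB Require Import structures.
From mathcomp Require Import all_boot all_order all_algebra.
From mathcomp Require Import all_classical all_reals all_analysis.
Set Implicit Arguments. Unset Strict Implicit. Unset Printing Implicit Defensive.
Import Order.TTheory GRing.Theory Num.Theory.
Import numFieldNormedType.Exports.
Local Open Scope ring_scope.
Local Open Scope classical_set_scope.

Section Defs.
Variable R : realType.

Definition ebasis (p : nat) (j : 'I_p) : 'rV[R]_p := delta_mx 0 j.

Definition partial (p : nat) (f : 'rV[R]_p -> R) (j : 'I_p) (x : 'rV[R]_p) : R :=
  'D_(ebasis j) f x.

Definition grad (p : nat) (f : 'rV[R]_p -> R) (x : 'rV[R]_p) : 'rV[R]_p :=
  \row_j partial f j x.

Definition hess (p : nat) (f : 'rV[R]_p -> R) (x : 'rV[R]_p) : 'M[R]_p :=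
  \matrix_(i, j) 'D_(ebasis i) (partial f j) x.

Definition enorm (p : nat) (v : 'rV[R]_p) : R := Num.sqrt (\sum_i v 0 i ^+ 2).
Definition enormc (p : nat) (v : 'cV[R]_p) : R := Num.sqrt (\sum_i v i 0 ^+ 2).

Definition spec_norm (n : nat) (A : 'M[R]_n) : R :=
  sup [set enormc (A *m x) | x in [set x : 'cV[R]_n | enormc x <= 1]].

Definition convex_fun (p : nat) (f : 'rV[R]_p -> R) : Prop :=
  forall x y (t : R), (0 <= t)%R -> (t <= 1)%R -> f (t *: x + (1 - t) *: y) <= t * f x + (1 - t) * f y.

Definition lipschitz_grad (p : nat) (f : 'rV[R]_p -> R) : Prop :=
  (forall x, differentiable f x) /\
  exists Lg : R, forall x y, enorm (grad f x - grad f y) <= Lg * enorm (x - y).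

Definition coord_lipschitz (p : nat) (f : 'rV[R]_p -> R) (j : 'I_p) (L : R) : Prop :=
  forall x (t : R), `|partial f j (x + t *: ebasis j) - partial f j x| <= L * `|t|.

Definition C2_near (p : nat) (f : 'rV[R]_p -> R) (a : 'rV[R]_p) : Prop :=
  \forall x \near a,
    differentiable f x /\ (forall j, differentiable (partial f j) x) /\
    (forall i j, {for x, continuous (fun y => hess f y i j)}).

Definition proper_fun (g : R -> \bar R) : Prop :=
  (exists x, g x < +oo)%E /\ (forall x, g x != -oo)%E.

Definition closed_fun (g : R -> \bar R) : Prop :=
  forall a : \bar R, closed [set x | (g x <= a)%E].

Definition convex_efun (g : R -> \bar R) : Prop :=
  forall x y (t : R), (0 <= t)%R -> (t <= 1)%R ->
    (g (t * x + (1 - t) * y)%R <= t%:E * g x + (1 - t)%:E * g y)%E.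

Definition subdiff (g : R -> \bar R) (x : R) : set R :=
  [set v | (g x \is a fin_num)%E /\ forall y, (g x + (v * (y - x))%R%:E <= g y)%E].

Definition singleton_set (A : set R) : Prop := exists v, A = [set v].

Definition C2_near1 (g : R -> \bar R) (a : R) : Prop :=
  exists h : R -> R, \forall x \near a,
    g x = (h x)%:E /\ derivable h x 1 /\ derivable (derive1 h) x 1 /\
    {for x, continuous (derive1 (derive1 h))}.

Definition is_prox (gam : R) (g : R -> \bar R) (P : R -> R) : Prop :=
  forall z y, (gam%:E * g (P z) + ((P z - z) ^+ 2 / 2)%R%:E
               <= gam%:E * g y + ((y - z) ^+ 2 / 2)%R%:E)%E.

End Defs.

(* Main.v *)
Require Import Defs.
From HB Require Import structures.
From mathcomp Require Import all_boot all_order all_algebra.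
From mathcomp Require Import all_classical all_reals all_analysis.
From mathcomp Require Import ring lra.
Import Order.TTheory GRing.Theory Num.Theory.
Import numFieldNormedType.Exports.
Local Open Scope ring_scope.

Lemma hess_diag_le (R : realType) (p : nat) (f : 'rV[R]_p -> R) (x : 'rV[R]_p) j (L : R) :
  differentiable (partial f j) x -> coord_lipschitz f j L -> hess f x j j <= L.
Proof.
move=> df cl; rewrite mxE /derive.
apply: limr_le; first exact: diff_derivable.
near=> h => /=.
have hn0 : h != 0 by near: h; exact: nbhs_dnbhs_neq.
rewrite /shift [h *: _ + x]addrC.
have := cl x h => H.
apply: le_trans (ler_norm _) _.
rewrite normrZ normfV mulrC ler_pdivrMr ?normr_gt0 //.
Unshelve. all: by end_near.
Qed.

Lemma cs_sum (R : realType) n (q x : 'I_n -> R) :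
  (\sum_i q i * x i) ^+ 2 <= (\sum_i q i ^+ 2) * (\sum_i x i ^+ 2).
Proof.
set a := \sum_i q i ^+ 2; set b := \sum_i x i ^+ 2; set s := \sum_i q i * x i.
have a0 : 0 <= a by apply: sumr_ge0 => i _; exact: sqr_ge0.
have b0 : 0 <= b by apply: sumr_ge0 => i _; exact: sqr_ge0.
have [a00|an0] := eqVneq a 0.
  have q0 : forall i, q i = 0.
    move=> i0; apply/eqP; rewrite -sqrf_eq0; apply/eqP.
    apply: (@psumr_eq0P _ _ predT (fun i => q i ^+ 2)) => //.
      by move=> k _; exact: sqr_ge0.
  have -> : s = 0 by rewrite /s big1 // => i _; rewrite q0 mul0r.
  by rewrite expr0n /= mulr_ge0.
have E : \sum_i (a * x i - s * q i) ^+ 2 = a ^+ 2 * b - 2 * a * s * s + s ^+ 2 * a.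
  rewrite (eq_bigr (fun i => a ^+ 2 * x i ^+ 2 + (- (2 * a * s)) * (q i * x i) + s ^+ 2 * q i ^+ 2)); last first.
    by move=> i _; ring.
  rewrite !big_split /= -!mulr_sumr -/a -/b -/s; ring.
have : 0 <= \sum_i (a * x i - s * q i) ^+ 2 by apply: sumr_ge0 => i _; exact: sqr_ge0.
have ap : 0 < a by rewrite lt_def an0 a0.
rewrite E => H; nra.
Qed.

Theorem lemma5 (R : realType) (p : nat)
  (f : 'rV[R]_p -> R) (g : 'I_p -> R -> \bar R)
  (xs : 'rV[R]_p) (gam L pd : 'I_p -> R) (prox : 'I_p -> R -> R)
  (Q : 'M[R]_#|[set j : 'I_p | `[< singleton_set (subdiff (g j) (xs 0 j)) >]]|) :
  let S := [set j : 'I_p | `[< singleton_set (subdiff (g j) (xs 0 j)) >]] in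
  convex_fun f -> lipschitz_grad f ->
  (forall j, proper_fun (g j) /\ closed_fun (g j) /\ convex_efun (g j)) ->
  (forall x : 'rV[R]_p,
     (f xs)%:E + \sum_j g j (xs 0%R j) <= (f x)%:E + \sum_j g j (x 0%R j))%E ->
  (forall j, j \in S -> C2_near1 (g j) (xs 0 j)) ->
  C2_near f xs ->
  (forall v : 'rV[R]_p, (forall i, i \notin S -> v 0 i = 0) -> v != 0 ->
     0 < (v *m hess f xs *m v^T) 0 0) ->
  (forall j, coord_lipschitz f j (L j)) ->
  (forall j, 0 < gam j /\ gam j * L j <= 1) ->
  (forall j, j \in S ->
     is_prox (gam j) (g j) (prox j) /\
     is_derive (xs 0 j - gam j * partial f j xs) 1 (prox j) (pd j) /\ 0 < pd j) ->
  let u := fun j => 1 / (gam j * pd j) - 1 / gam j in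
  let M := \matrix_(a, b) (hess f xs (enum_val a) (enum_val b)
                           + (a == b)%:R * u (enum_val a)) in
  Q^T = Q -> (forall x : 'cV[R]_#|S|, 0 <= (x^T *m Q *m x) 0 0) -> Q *m Q = M ->
  forall k : 'I_#|S|,
    spec_norm ((gam (enum_val k) * pd (enum_val k)) *: (col k Q *m (col k Q)^T)) <= 1.
Proof.
move=> S _ _ _ _ _ C2 _ cl gL hp u M QT Qpsd QQ k.
set j := enum_val k.
have jS : j \in S := enum_valP k.
have [gpos gLle] := gL j.
have [_ [_ pdpos]] := hp j jS.
have [_ [dp _]] := nbhs_singleton C2.
have Hle := @hess_diag_le _ _ _ _ _ _ (dp j) (cl j) : hess f xs j j <= L j.
set q := col k Q.
set c := gam j * pd j.
have cpos : 0 < c by rewrite mulr_gt0.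
have qq : \sum_i q i 0 ^+ 2 = M k k.
  rewrite -QQ mxE; apply: eq_bigr => i _; rewrite !mxE expr2.
  by have -> : Q k i = Q i k by rewrite -{1}QT mxE.
have Mkk : M k k = hess f xs j j + u j by rewrite mxE eqxx mul1r.
have ca : c * M k k <= 1.
  have e1 : c * u j = 1 - pd j.
    rewrite /u /c; field.
    by rewrite !lt0r_neq0.
  rewrite Mkk mulrDr e1.
  have : c * hess f xs j j <= pd j.
    apply: (le_trans (y := c * L j)); first by rewrite ler_pM2l.
    by rewrite /c; nra.
  lra.
clearbody c.
rewrite /spec_norm; apply: ge_sup.
  exists (enormc ((c *: (q *m q^T)) *m 0)); exists 0 => //.
  rewrite /= /enormc big1 ?sqrtr0 ?ler01 // => i _; rewrite mxE expr2 mul0r ?mxE.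
  by [].
move=> _ [x xle <-].
have bl : \sum_i x i 0 ^+ 2 <= 1.
  by move: xle; rewrite /= /enormc => H; rewrite -(@ler_sqrt _ _ 1) ?ler01 // sqrtr1.
set s := \sum_l q l 0 * x l 0.
have Bx : forall i, ((c *: (q *m q^T)) *m x) i 0 = c * q i 0 * s.
  move=> i; rewrite mxE /s mulr_sumr; apply: eq_bigr => l _.
  by rewrite !mxE big_ord1 !mxE; ring.
rewrite /enormc -sqrtr1 ler_sqrt //.
rewrite (eq_bigr (fun i => (c * s) ^+ 2 * q i 0 ^+ 2)); last by move=> i _; rewrite Bx; ring.
rewrite -mulr_sumr qq.
have csq := @cs_sum _ _ (fun l => q l 0) (fun l => x l 0).
rewrite -/s qq in csq.
have M0 : 0 <= M k k by rewrite -qq; apply: sumr_ge0 => i _; exact: sqr_ge0.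
have b0 : 0 <= \sum_i x i 0 ^+ 2 by apply: sumr_ge0 => i _; exact: sqr_ge0.
move: csq bl ca M0 b0 cpos; set m := M k k; set b := \sum_i _ => csq bl ca M0 b0 cpos.
have h1 : s ^+ 2 <= m by apply: le_trans csq _; rewrite ler_piMr.
have h2 : 0 <= c * m by rewrite mulr_ge0 // ltW.
have h3 : (c * m) ^+ 2 <= 1 by rewrite expr2; nra.
apply: le_trans h3; rewrite !exprMn -mulrA.
have c2 : 0 <= c ^+ 2 by exact: sqr_ge0.
have h4 : s ^+ 2 * m <= m ^+ 2 by rewrite [X in _ <= X]expr2; nra.
by rewrite ler_pM2l ?exprn_gt0.
Qed.
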